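(* Let $C,D$ be $\mathcal{FL}_{\bot\mathit{reg}}$ concept descriptions and $\mathcal T$ an $\mathcal{FL}_{\bot\mathit{reg}}$ TBox. Let $\Sigma_C\subseteq N_C$ and $\Sigma_R\subseteq N_R$ be the sets of all concept names, respectively role names, occurring in $C$, $D$ or $\mathcal T$, and let $B\in N_C\setminus\Sigma_C$ be a fresh concept name. For a concept description $K$ let $K^B$ be obtained from $K$ by replacing every occurrence of $\bot$ with $B$, and let $\mathcal T^B$ be obtained from $\mathcal T$ by replacing every occurrence of $\bot$ with $B$. Let $\mathcal R$ be the TBox consisting of the axioms $B\sqsubseteq A$ for every $A\in\Sigma_C$ and $B\sqsubseteq\forall r.B$ for every $r\in\Sigma_R$. Then $C\sqsubseteq_{\mathcal T}D$ holds if and only if $C^B\sqsubseteq_{\mathcal T^B\cup\mathcal R}D^B$ holds (the latter being an instance in $\mathcal{FL}_{\mathit{reg}}$).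
   Context: Let $N_C$ and $N_R$ be disjoint countably infinite sets of concept names and role names. Regular role expressions are generated by $E ::= \emptyset \mid \varepsilon \mid r \mid (E+E) \mid (EE) \mid E^{*}$ with $r\in N_R$, with languages $\mathcal L(E)\subseteq N_R^*$ defined as usual. $\mathcal{FL}_{\bot\mathit{reg}}$ concept descriptions are generated by $C ::= A \mid \top \mid \bot \mid (C\sqcap C) \mid \forall E.C$ with $A\in N_C$; $\mathcal{FL}_{\mathit{reg}}$ is the fragment without $\bot$. An interpretation $\mathcal I=(\Delta^{\mathcal I},\cdot^{\mathcal I})$ has nonempty domain, $A^{\mathcal I}\subseteq\Delta^{\mathcal I}$, $r^{\mathcal I}\subseteq(\Delta^{\mathcal I})^2$; $E^{\mathcal I}$ is the union over words $r_1\cdots r_n\in\mathcal L(E)$ of $r_1^{\mathcal I}\circ\cdots\circ r_n^{\mathcal I}$ (identity for the empty word); $\top^{\mathcal I}=\Delta^{\mathcal I}$, $\bot^{\mathcal I}=\emptyset$, $(C\sqcap D)^{\mathcal I}=C^{\mathcal I}\cap D^{\mathcal I}$, $(\forall E.C)^{\mathcal I}=\{x\mid y\in C^{\mathcal I}$ for all $y$ with $(x,y)\in E^{\mathcal I}\}$. A TBox is a finite set of axioms $K\sqsubseteq M$ between concept descriptions; $\mathcal I$ is a model of a TBox if $K^{\mathcal I}\subseteq M^{\mathcal I}$ for all its axioms; $C\sqsubseteq_{\mathcal T}D$ means $C^{\mathcal I}\subseteq D^{\mathcal I}$ for every model $\mathcal I$ of $\mathcal T$. *)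

(* Defs.v *)
From Stdlib Require Import List.
Import ListNotations.

(* Concept names and role names: two disjoint countably infinite sets,
   represented by two distinct copies of nat. *)
Definition CName := nat.
Definition RName := nat.

Inductive rexp : Type :=
| REmpty : rexp
| REps : rexp
| RRole : RName -> rexp
| RPlus : rexp -> rexp -> rexp
| RConc : rexp -> rexp -> rexp
| RStar : rexp -> rexp.

Inductive lang : rexp -> list RName -> Prop :=
| L_eps : lang REps []
| L_role : forall r, lang (RRole r) [r]
| L_plusl : forall E F w, lang E w -> lang (RPlus E F) w
| L_plusr : forall E F w, lang F w -> lang (RPlus E F) w
| L_conc : forall E F u v, lang E u -> lang F v -> lang (RConc E F) (u ++ v)
| L_star0 : forall E, lang (RStar E) []
| L_starS : forall E u v, lang E u -> lang (RStar E) v -> lang (RStar E) (u ++ v).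

Inductive concept : Type :=
| CAtom : CName -> concept
| CTop : concept
| CBot : concept
| CAnd : concept -> concept -> concept
| CAll : rexp -> concept -> concept.

Fixpoint bot_free (C : concept) : Prop :=
  match C with
  | CBot => False
  | CAnd C1 C2 => bot_free C1 /\ bot_free C2
  | CAll _ C1 => bot_free C1
  | _ => True
  end.

Definition axiom := (concept * concept)%type.
Definition tbox := list axiom.

Record interp := {
  dom : Type;
  dom_ne : inhabited dom;
  cint : CName -> dom -> Prop;
  rint : RName -> dom -> dom -> Prop
}.

Fixpoint word_rel (I : interp) (w : list RName) : dom I -> dom I -> Prop :=
  match w with
  | [] => fun x y => x = y
  | r :: w' => fun x y => exists z, rint I r x z /\ word_rel I w' z y
  end.

Definition rexp_rel (I : interp) (E : rexp) (x y : dom I) : Prop :=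
  exists w, lang E w /\ word_rel I w x y.

Fixpoint cext (I : interp) (C : concept) : dom I -> Prop :=
  match C with
  | CAtom A => cint I A
  | CTop => fun _ => True
  | CBot => fun _ => False
  | CAnd C1 C2 => fun x => cext I C1 x /\ cext I C2 x
  | CAll E C1 => fun x => forall y, rexp_rel I E x y -> cext I C1 y
  end.

Definition model (I : interp) (T : tbox) : Prop :=
  forall ax, In ax T -> forall x, cext I (fst ax) x -> cext I (snd ax) x.

Definition subsumed (T : tbox) (C D : concept) : Prop :=
  forall I : interp, model I T -> forall x, cext I C x -> cext I D x.

Fixpoint rexp_roles (E : rexp) : list RName :=
  match E with
  | REmpty | REps => []
  | RRole r => [r]
  | RPlus E F | RConc E F => rexp_roles E ++ rexp_roles F
  | RStar E => rexp_roles E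
  end.

Fixpoint concept_names (C : concept) : list CName :=
  match C with
  | CAtom A => [A]
  | CAnd C1 C2 => concept_names C1 ++ concept_names C2
  | CAll _ C1 => concept_names C1
  | _ => []
  end.

Fixpoint concept_roles (C : concept) : list RName :=
  match C with
  | CAnd C1 C2 => concept_roles C1 ++ concept_roles C2
  | CAll E C1 => rexp_roles E ++ concept_roles C1
  | _ => []
  end.

Definition tbox_names (T : tbox) : list CName :=
  flat_map (fun ax => concept_names (fst ax) ++ concept_names (snd ax)) T.
Definition tbox_roles (T : tbox) : list RName :=
  flat_map (fun ax => concept_roles (fst ax) ++ concept_roles (snd ax)) T.

Definition sigmaC (C D : concept) (T : tbox) : list CName :=
  concept_names C ++ concept_names D ++ tbox_names T.
Definition sigmaR (C D : concept) (T : tbox) : list RName :=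
  concept_roles C ++ concept_roles D ++ tbox_roles T.

Fixpoint replB (B : CName) (C : concept) : concept :=
  match C with
  | CBot => CAtom B
  | CAnd C1 C2 => CAnd (replB B C1) (replB B C2)
  | CAll E C1 => CAll E (replB B C1)
  | C' => C'
  end.

Definition tboxB (B : CName) (T : tbox) : tbox :=
  map (fun ax => (replB B (fst ax), replB B (snd ax))) T.

Definition tboxR (B : CName) (SC : list CName) (SR : list RName) : tbox :=
  map (fun A => (CAtom B, CAtom A)) SC ++
  map (fun r => (CAtom B, CAll (RRole r) (CAtom B))) SR.

(* Main.v *)
Require Import Defs.
From Stdlib Require Import List ProofIrrelevance PeanoNat Classical.
Import ListNotations.

Lemma lang_roles E w : lang E w -> forall r, In r w -> In r (rexp_roles E).
Proof.
  induction 1; simpl; intros r0 Hr; try tauto;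
    rewrite ?in_app_iff in *; firstorder.
Qed.

Section IBsec.
Variable I : interp.
Variable B : CName.

Definition IB : interp :=
  {| dom := dom I; dom_ne := dom_ne I;
     cint := fun A y => if Nat.eqb A B then False else cint I A y;
     rint := rint I |}.

Lemma word_IB w : forall (x y : dom I), word_rel IB w x y <-> word_rel I w x y.
Proof.
  induction w as [|r w IH]; simpl; intros x y; [tauto|].
  split; intros [z [H1 H2]]; exists z; split; auto; apply IH; auto.
Qed.

Lemma replB_IB K : ~ In B (concept_names K) ->
  forall x, cext IB (replB B K) x <-> cext I K x.
Proof.
  induction K; simpl; intros HB x.
  - destruct (Nat.eqb_spec c B); [subst; tauto| tauto].
  - tauto.
  - rewrite Nat.eqb_refl; tauto.
  - rewrite in_app_iff in HB. rewrite IHK1, IHK2 by tauto; tauto.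
  - split; intros H y [w [Hw Hr]]; apply IHK; auto; apply H; exists w; split; auto;
      apply word_IB; auto.
Qed.
End IBsec.

Section Restr.
Variable J : interp.
Variable B : CName.
Variable x0 : dom J.
Hypothesis Hx0 : ~ cint J B x0.
Variable SC : list CName.
Variable SR : list RName.
Hypothesis HSC : forall A y, In A SC -> cint J B y -> cint J A y.
Hypothesis HSR : forall r y z, In r SR -> cint J B y -> rint J r y z -> cint J B z.

Definition RD := {y : dom J | ~ cint J B y}.
Definition restr : interp :=
  {| dom := RD; dom_ne := inhabits (exist _ x0 Hx0);
     cint := fun A y => cint J A (proj1_sig y);
     rint := fun r y z => rint J r (proj1_sig y) (proj1_sig z) |}.

Lemma word_to w : forall (y z : RD), word_rel restr w y z -> word_rel J w (proj1_sig y) (proj1_sig z).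
Proof.
  induction w as [|r w IH]; simpl; intros y z H.
  - subst; auto.
  - destruct H as [m [H1 H2]]. exists (proj1_sig m); split; auto.
Qed.

Lemma closB w : (forall r, In r w -> In r SR) -> forall m z, word_rel J w m z -> cint J B m -> cint J B z.
Proof.
  induction w as [|r w IH]; simpl; intros Hw m z H Hm.
  - subst; auto.
  - destruct H as [k [H1 H2]]. apply (IH (fun r0 h => Hw r0 (or_intror h)) k); auto.
    apply (HSR r m k); auto.
Qed.

Lemma word_from w : (forall r, In r w -> In r SR) -> forall (y : RD) z (Hz : ~ cint J B z),
  word_rel J w (proj1_sig y) z -> word_rel restr w y (exist _ z Hz).
Proof.
  induction w as [|r w IH]; simpl; intros Hw y z Hz H.
  - destruct y as [y Hy]; simpl in H; subst. f_equal; apply proof_irrelevance.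
  - destruct H as [m [H1 H2]].
    assert (Hm : ~ cint J B m).
    { intro Hb. apply Hz. apply (closB w (fun r0 h => Hw r0 (or_intror h)) m); auto. }
    exists (exist _ m Hm); split; auto.
Qed.

Lemma allB K : incl (concept_names K) SC -> incl (concept_roles K) SR ->
  forall y, cint J B y -> cext J (replB B K) y.
Proof.
  induction K; simpl; intros Hn Hr y Hy; auto.
  - apply HSC; auto. apply Hn; simpl; auto.
  - split; [apply IHK1|apply IHK2]; auto; intros a h; (apply Hn || apply Hr);
      apply in_app_iff; auto.
  - intros z [w [Hw Hwr]]. apply IHK; auto.
    + intros a h; apply Hr, in_app_iff; auto.
    + apply (closB w) with (m := y); auto. intros r0 h. apply Hr, in_app_iff. left.
      eapply lang_roles; eauto.
Qed.

Lemma restr_eq K : incl (concept_names K) SC -> incl (concept_roles K) SR ->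
  forall y : RD, cext restr K y <-> cext J (replB B K) (proj1_sig y).
Proof.
  induction K; simpl; intros Hn Hr y.
  - tauto.
  - tauto.
  - destruct y; simpl; tauto.
  - rewrite IHK1, IHK2; try tauto; intros a h; (apply Hn || apply Hr); apply in_app_iff; auto.
  - assert (Hr' : incl (concept_roles K) SR) by (intros a h; apply Hr, in_app_iff; auto).
    split.
    + intros H z [w [Hw Hwr]].
      destruct (classic (cint J B z)) as [Hb|Hb].
      * apply allB; auto.
      * apply (IHK Hn Hr' (exist _ z Hb)). apply H. exists w; split; auto.
        apply word_from; auto. intros r0 h. apply Hr, in_app_iff. left.
        eapply lang_roles; eauto.
    + intros H z [w [Hw Hwr]]. apply IHK; auto. apply H. exists w; split; auto.
      apply word_to; auto.
Qed.
End Restr.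

Lemma names_T T ax : In ax T -> incl (concept_names (fst ax) ++ concept_names (snd ax)) (tbox_names T).
Proof. intros H a h. unfold tbox_names. apply in_flat_map. eauto. Qed.
Lemma roles_T T ax : In ax T -> incl (concept_roles (fst ax) ++ concept_roles (snd ax)) (tbox_roles T).
Proof. intros H a h. unfold tbox_roles. apply in_flat_map. eauto. Qed.

Theorem theorem2 (C D : concept) (T : tbox) (B : CName) :
  ~ In B (sigmaC C D T) ->
  (subsumed T C D <->
   subsumed (tboxB B T ++ tboxR B (sigmaC C D T) (sigmaR C D T))
            (replB B C) (replB B D)).
Proof.
  intros HB.
  set (SC := sigmaC C D T). set (SR := sigmaR C D T).
  assert (nC : incl (concept_names C) SC) by (intros a h; unfold SC, sigmaC; rewrite !in_app_iff; auto).
  assert (nD : incl (concept_names D) SC) by (intros a h; unfold SC, sigmaC; rewrite !in_app_iff; auto).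
  assert (rC : incl (concept_roles C) SR) by (intros a h; unfold SR, sigmaR; rewrite !in_app_iff; auto).
  assert (rD : incl (concept_roles D) SR) by (intros a h; unfold SR, sigmaR; rewrite !in_app_iff; auto).
  assert (nT : forall ax, In ax T -> incl (concept_names (fst ax)) SC /\ incl (concept_names (snd ax)) SC).
  { intros ax H; split; intros a h; unfold SC, sigmaC; rewrite !in_app_iff; right; right;
      apply (names_T T ax H); apply in_app_iff; auto. }
  assert (rT : forall ax, In ax T -> incl (concept_roles (fst ax)) SR /\ incl (concept_roles (snd ax)) SR).
  { intros ax H; split; intros a h; unfold SR, sigmaR; rewrite !in_app_iff; right; right;
      apply (roles_T T ax H); apply in_app_iff; auto. }
  split.
  - intros Hsub J HJ x Hx.
    assert (HJT : forall ax, In ax T -> forall y, cext J (replB B (fst ax)) y -> cext J (replB B (snd ax)) y).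
    { intros ax Hax y. apply (HJ (replB B (fst ax), replB B (snd ax))).
      apply in_app_iff; left. unfold tboxB. apply in_map_iff. eauto. }
    assert (HSC : forall A y, In A SC -> cint J B y -> cint J A y).
    { intros A y HA Hy. apply (HJ (CAtom B, CAtom A)); auto.
      apply in_app_iff; right. unfold tboxR. apply in_app_iff; left. apply in_map_iff; eauto. }
    assert (HSR : forall r y z, In r SR -> cint J B y -> rint J r y z -> cint J B z).
    { intros r y z Hr Hy Hyz. apply (HJ (CAtom B, CAll (RRole r) (CAtom B)) ltac:(
        apply in_app_iff; right; unfold tboxR; apply in_app_iff; right; apply in_map_iff; eauto) y Hy).
      exists [r]; split; [constructor|]. simpl; eauto. }
    destruct (classic (cint J B x)) as [Hb|Hb].
    + apply (allB J B SC SR HSC HSR); auto.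
    + set (I := restr J B x Hb).
      assert (HI : model I T).
      { intros ax Hax y Hy. destruct (nT ax Hax), (rT ax Hax).
        apply (restr_eq J B x Hb SC SR HSC HSR); auto.
        apply HJT; auto. apply (restr_eq J B x Hb SC SR HSC HSR); auto. }
      apply (restr_eq J B x Hb SC SR HSC HSR D nD rD (exist _ x Hb)).
      apply Hsub; auto.
      apply (restr_eq J B x Hb SC SR HSC HSR C nC rC (exist _ x Hb)). auto.
  - intros Hsub I HI x Hx.
    assert (Hn : forall K, incl (concept_names K) SC -> ~ In B (concept_names K)).
    { intros K Hk h. apply HB. apply Hk; auto. }
    apply (replB_IB I B D (Hn D nD)).
    apply Hsub.
    + intros ax Hax y. apply in_app_iff in Hax as [Hax|Hax].
      * unfold tboxB in Hax. apply in_map_iff in Hax as [a [<- Ha]]. simpl.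
        destruct (nT a Ha).
        rewrite !replB_IB by auto. apply HI; auto.
      * unfold tboxR in Hax. apply in_app_iff in Hax as [Hax|Hax];
          apply in_map_iff in Hax as [a [<- Ha]]; simpl; rewrite Nat.eqb_refl; tauto.
    + apply replB_IB; auto.
Qed.
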